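(* Let $0<k_1<k_2$, $d>0$, and assume $2d\sqrt{k_2^2-k_1^2}\neq n\pi$ for every positive integer $n$. Consider the equation $W(\xi,\delta)=0$ for $\xi\in\mathbb{R}$ and $\delta\ge0$ (where $\delta=0$ means $\delta=0^+$). Its solutions are finitely many points $\{\pm\xi_n:\ n=1,\dots,N\}$, all occurring with $\delta=0^+$, each a simple zero of $\xi\mapsto W(\xi,0^+)$, and satisfying $k_1<|\xi_n|<k_2$; there are no other solutions. Moreover $N\ge1$, i.e. there is at least one nontrivial solution of $W(\xi,0^+)=0$.
   Context: Let $q(x)=(k_2^2-k_1^2)\chi_{[-d,d]}(x)$. The square root $\sqrt{z}$ is the principal branch on $\mathbb{C}\setminus(-\infty,0]$, positive on $(0,\infty)$. For $\xi\in\mathbb{R}$, $\delta>0$, let $u_\pm(\xi,\delta;\cdot)$ be the solutions of $u''+(k_1^2+q(x)-\xi^2+i\delta)u=0$ (with $u,u'$ continuous) determined by $u_\pm(\xi,\delta;x)=e^{\pm ix\sqrt{k_1^2-\xi^2+i\delta}}$ for $\pm x>d$; $u_\pm(\xi,0^+;\cdot)$ denotes the limit as $\delta\to0^+$ (so $\sqrt{k_1^2-\xi^2}$ is replaced by $i\sqrt{\xi^2-k_1^2}$ when $|\xi|>k_1$). The Wronskian is $W(\xi,\delta)=u_-\partial_xu_+-u_+\partial_xu_-$ (independent of $x$), and $W(\xi,0^+)=\lim_{\delta\to0^+}W(\xi,\delta)$. *)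

(* Defs.v *)
From Stdlib Require Import Reals.
From Coquelicot Require Import Coquelicot.
Open Scope R_scope.

Definition Cexp (z : C) : C :=
  (exp (Re z) * cos (Im z), exp (Re z) * sin (Im z)).

(* Principal square root on C \ (-oo,0]:
   sqrt z = sqrt((|z| + Re z)/2) + i sgn(Im z) sqrt((|z| - Re z)/2),
   positive on (0,oo).  (Its value on (-oo,0] is irrelevant here:
   it is only ever applied with Im z = delta > 0.) *)
Definition Csqrt (z : C) : C :=
  (sqrt ((Cmod z + Re z) / 2),
   (if Rle_dec 0 (Im z) then 1 else -1) * sqrt ((Cmod z - Re z) / 2)).

Definition q (k1 k2 d : R) (x : R) : R :=
  if Rle_dec (- d) x then (if Rle_dec x d then k2 ^ 2 - k1 ^ 2 else 0) else 0.

Definition coef (k1 k2 d xi delta : R) (x : R) : C :=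
  (k1 ^ 2 + q k1 k2 d x - xi ^ 2, delta).

(* [u] (with derivative [u']) solves u'' + c(x) u = 0 with u, u'
   continuous on R; the second derivative exists and the equation holds
   away from the jump points x = -d, x = d of q. *)
Definition solves_eq (k1 k2 d xi delta : R) (u u' : R -> C) : Prop :=
  (forall x, is_derive u x (u' x)) /\
  (forall x, continuous u' x) /\
  (forall x, x <> d -> x <> - d ->
     is_derive u' x (Copp (Cmult (coef k1 k2 d xi delta x) (u x)))).

Definition kappa (k1 xi delta : R) : C := Csqrt (k1 ^ 2 - xi ^ 2, delta).

Definition is_u_plus (k1 k2 d xi delta : R) (u u' : R -> C) : Prop :=
  solves_eq k1 k2 d xi delta u u' /\
  (forall x, d < x -> u x = Cexp (Cmult (0, x) (kappa k1 xi delta))).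

Definition is_u_minus (k1 k2 d xi delta : R) (u u' : R -> C) : Prop :=
  solves_eq k1 k2 d xi delta u u' /\
  (forall x, x < - d -> u x = Cexp (Cmult (0, - x) (kappa k1 xi delta))).

Definition wronskian (um um' up up' : R -> C) (x : R) : C :=
  Cminus (Cmult (um x) (up' x)) (Cmult (up x) (um' x)).

(* Main.v *)
Require Import Defs.
From Stdlib Require Import Reals Lra Lia ZArith ClassicalEpsilon.
From Coquelicot Require Import Coquelicot.
Open Scope R_scope.

Lemma is_derive_fst (f : R -> C) x l :
  is_derive f x l -> is_derive (fun t => fst (f t)) x (fst l).
Proof.
  intros H. unfold is_derive in *.
  eapply filterdiff_ext_lin.
  apply (filterdiff_comp' f (fun t : C => fst t) x _ (fun t : C => fst t) H).
  apply filterdiff_linear. apply (@is_linear_fst R_AbsRing R_NormedModule R_NormedModule).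
  intros y. simpl. reflexivity.
Qed.
Lemma is_derive_snd (f : R -> C) x l :
  is_derive f x l -> is_derive (fun t => snd (f t)) x (snd l).
Proof.
  intros H. unfold is_derive in *.
  eapply filterdiff_ext_lin.
  apply (filterdiff_comp' f (fun t : C => snd t) x _ (fun t : C => snd t) H).
  apply filterdiff_linear. apply (@is_linear_snd R_AbsRing R_NormedModule R_NormedModule).
  intros y. simpl. reflexivity.
Qed.
Lemma is_derive_C (f g : R -> R) x a b :
  is_derive f x a -> is_derive g x b ->
  is_derive (fun t => ((f t, g t) : C)) x ((a, b) : C).
Proof.
  intros Hf Hg.
  assert (H := is_derive_plus _ _ _ _ _
     (is_derive_scal_l f x a ((1,0) : C) Hf) (is_derive_scal_l g x b ((0,1):C) Hg)).
  eapply is_derive_ext; [|eapply filterdiff_ext_lin; [exact H|]].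
  - intros t. simpl. unfold plus, scal; simpl. unfold prod_plus, prod_scal; simpl.
    change plus with Rplus. change scal with Rmult. unfold mult; simpl. f_equal; ring.
  - intros y. simpl. unfold plus, scal; simpl. unfold prod_plus, prod_scal; simpl.
    change plus with Rplus. change scal with Rmult. unfold mult; simpl. f_equal; ring.
Qed.

Lemma Rd_mult (f g : R -> R) x a b : is_derive f x a -> is_derive g x b ->
  is_derive (fun t => f t * g t) x (a * g x + f x * b).
Proof. intros Hf Hg. exact (is_derive_mult f g x a b Hf Hg Rmult_comm). Qed.
Lemma Rd_plus (f g : R -> R) x a b : is_derive f x a -> is_derive g x b ->
  is_derive (fun t => f t + g t) x (a + b).
Proof. intros Hf Hg. exact (is_derive_plus f g x a b Hf Hg). Qed.
Lemma Rd_minus (f g : R -> R) x a b : is_derive f x a -> is_derive g x b ->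
  is_derive (fun t => f t - g t) x (a - b).
Proof. intros Hf Hg. exact (is_derive_minus f g x a b Hf Hg). Qed.

Lemma is_derive_C_split (f : R -> C) x (l : C) :
  is_derive (fun t => fst (f t)) x (fst l) -> is_derive (fun t => snd (f t)) x (snd l) ->
  is_derive f x l.
Proof.
  intros H1 H2. eapply is_derive_ext; [|exact (is_derive_C _ _ x _ _ H1 H2)].
  intros t; simpl. destruct (f t); reflexivity.
Qed.
Lemma is_derive_C_eq (f : R -> C) x (l l' : C) : is_derive f x l -> l = l' -> is_derive f x l'.
Proof. intros H ->; exact H. Qed.

Lemma Rd_eq (f : R -> R) x l l' : is_derive f x l -> l = l' -> is_derive f x l'.
Proof. intros H ->; exact H. Qed.

Lemma is_derive_Cmult (f g : R -> C) x a b :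
  is_derive f x a -> is_derive g x b ->
  is_derive (fun t => Cmult (f t) (g t)) x (Cplus (Cmult a (g x)) (Cmult (f x) b)).
Proof.
  intros Hf Hg.
  pose proof (is_derive_fst _ _ _ Hf) as f1. pose proof (is_derive_snd _ _ _ Hf) as f2.
  pose proof (is_derive_fst _ _ _ Hg) as g1. pose proof (is_derive_snd _ _ _ Hg) as g2.
  apply is_derive_C_split.
  - apply (is_derive_ext (fun t => fst (f t) * fst (g t) - snd (f t) * snd (g t))).
    2: eapply Rd_eq; [apply (Rd_minus _ _ x _ _ (Rd_mult _ _ x _ _ f1 g1) (Rd_mult _ _ x _ _ f2 g2))|].
    intros t. destruct (f t), (g t); reflexivity.
    destruct a, b, (f x), (g x); simpl; ring.
  - apply (is_derive_ext (fun t => fst (f t) * snd (g t) + snd (f t) * fst (g t))).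
    2: eapply Rd_eq; [apply (Rd_plus _ _ x _ _ (Rd_mult _ _ x _ _ f1 g2) (Rd_mult _ _ x _ _ f2 g1))|].
    intros t. destruct (f t), (g t); reflexivity.
    destruct a, b, (f x), (g x); simpl; ring.
Qed.

Ltac cunf := unfold Cexp, Re, Im, Cminus, Cdiv, Cmult, Cplus, Copp, Cinv in *; simpl in *.

Lemma Rd_exp (f : R -> R) x a : is_derive f x a -> is_derive (fun t => exp (f t)) x (a * exp (f x)).
Proof. intros H. exact (is_derive_comp exp f x _ _ (is_derive_exp (f x)) H). Qed.
Lemma Rd_cos (f : R -> R) x a : is_derive f x a -> is_derive (fun t => cos (f t)) x (a * - sin (f x)).
Proof. intros H. exact (is_derive_comp cos f x _ _ (is_derive_cos (f x)) H). Qed.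
Lemma Rd_sin (f : R -> R) x a : is_derive f x a -> is_derive (fun t => sin (f t)) x (a * cos (f x)).
Proof. intros H. exact (is_derive_comp sin f x _ _ (is_derive_sin (f x)) H). Qed.

Lemma is_derive_Cexp (F : R -> C) x a :
  is_derive F x a -> is_derive (fun t => Cexp (F t)) x (Cmult a (Cexp (F x))).
Proof.
  intros H.
  pose proof (is_derive_fst _ _ _ H) as f1. pose proof (is_derive_snd _ _ _ H) as f2.
  apply is_derive_C_split; unfold Cexp, Re, Im; simpl.
  - eapply Rd_eq. apply (Rd_mult _ _ x _ _ (Rd_exp _ _ _ f1) (Rd_cos _ _ _ f2)).
    destruct a; simpl. ring.
  - eapply Rd_eq. apply (Rd_mult _ _ x _ _ (Rd_exp _ _ _ f1) (Rd_sin _ _ _ f2)).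
    destruct a; simpl; ring.
Qed.

Lemma Cexp_add (a b : C) : Cexp (Cplus a b) = Cmult (Cexp a) (Cexp b).
Proof.
  destruct a as [a1 a2], b as [b1 b2]; cunf.
  rewrite exp_plus, cos_plus, sin_plus.  f_equal; ring.
Qed.

Lemma Cexp_0 : Cexp (0,0) = (1,0).
Proof. unfold Cexp, Re, Im; simpl. rewrite exp_0, cos_0, sin_0. f_equal; ring. Qed.

Lemma Cexp_neq0 (a : C) : Cexp a <> (0,0).
Proof.
  destruct a as [a1 a2]; unfold Cexp, Re, Im; simpl. intros E. injection E as E1 E2.
  pose proof (exp_pos a1).
  apply Rmult_integral in E1; apply Rmult_integral in E2.
  destruct E1 as [E1|E1]; [lra|]. destruct E2 as [E2|E2]; [lra|].
  apply (cos_sin_0 a2); auto.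
Qed.

Lemma is_derive_lin (a b : C) x :
  is_derive (fun t : R => Cmult a ((t, 0) : C)) x a.
Proof.
  apply is_derive_C_split; simpl.
  - eapply Rd_eq. apply (Rd_minus _ _ x _ _ (Rd_mult _ _ x _ _ (is_derive_const (fst a) x) (is_derive_id x))
                            (Rd_mult _ _ x _ _ (is_derive_const (snd a) x) (is_derive_const 0 x))).
    simpl. unfold zero, one; simpl. ring.
  - eapply Rd_eq. apply (Rd_plus _ _ x _ _ (Rd_mult _ _ x _ _ (is_derive_const (fst a) x) (is_derive_const 0 x))
                            (Rd_mult _ _ x _ _ (is_derive_const (snd a) x) (is_derive_id x))).
    simpl. unfold zero, one; simpl. ring.
Qed.
Section Lims.
Context {T : Type} {F : (T -> Prop) -> Prop} {FF : Filter F}.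

Lemma lim_C (f g : T -> R) a b :
  filterlim f F (locally a) -> filterlim g F (locally b) ->
  filterlim (fun t => ((f t, g t) : C)) F (locally ((a, b) : C)).
Proof.
  intros Hf Hg P [eps HP].
  apply (filterlim_pair f g Hf Hg).
  exists (ball a eps) (ball b eps).
  - exists eps; auto.
  - exists eps; auto.
  - intros x y Hx Hy. apply HP. split; assumption.
Qed.

Lemma lim_fst (f : T -> C) (a : C) :
  filterlim f F (locally a) -> filterlim (fun t => fst (f t)) F (locally (fst a)).
Proof.
  intros H P [eps HP]. apply (H (fun y => P (fst y))). exists eps. intros y [Hy _]. apply HP. exact Hy.
Qed.
Lemma lim_snd (f : T -> C) (a : C) :
  filterlim f F (locally a) -> filterlim (fun t => snd (f t)) F (locally (snd a)).
Proof.
  intros H P [eps HP]. apply (H (fun y => P (snd y))). exists eps. intros y [_ Hy]. apply HP. exact Hy.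
Qed.

Lemma lim_split (f : T -> C) (a : C) :
  filterlim (fun t => fst (f t)) F (locally (fst a)) ->
  filterlim (fun t => snd (f t)) F (locally (snd a)) ->
  filterlim f F (locally a).
Proof.
  intros H1 H2. destruct a as [a1 a2].
  eapply filterlim_ext; [|exact (lim_C _ _ _ _ H1 H2)].
  intros t; simpl; destruct (f t); reflexivity.
Qed.

Lemma lim_Rplus (f g : T -> R) a b :
  filterlim f F (locally a) -> filterlim g F (locally b) ->
  filterlim (fun t => f t + g t) F (locally (a + b)).
Proof. intros Hf Hg. exact (filterlim_comp_2 f g Rplus Hf Hg (filterlim_plus a b)). Qed.
Lemma lim_Rmult (f g : T -> R) a b :
  filterlim f F (locally a) -> filterlim g F (locally b) ->
  filterlim (fun t => f t * g t) F (locally (a * b)).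
Proof. intros Hf Hg. exact (filterlim_comp_2 f g Rmult Hf Hg (@filterlim_mult R_AbsRing a b)). Qed.
Lemma lim_Ropp (f : T -> R) a :
  filterlim f F (locally a) -> filterlim (fun t => - f t) F (locally (- a)).
Proof. intros Hf. exact (filterlim_comp _ _ _ f Ropp F (locally a) _ Hf (filterlim_opp a)). Qed.
Lemma lim_Rminus (f g : T -> R) a b :
  filterlim f F (locally a) -> filterlim g F (locally b) ->
  filterlim (fun t => f t - g t) F (locally (a - b)).
Proof. intros Hf Hg. apply lim_Rplus; auto. apply lim_Ropp; auto. Qed.
Lemma lim_cont (f : T -> R) (h : R -> R) a :
  filterlim f F (locally a) -> continuous h a -> filterlim (fun t => h (f t)) F (locally (h a)).
Proof. intros Hf Hh. exact (filterlim_comp _ _ _ f h F (locally a) _ Hf Hh). Qed.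
Lemma lim_Rinv (f : T -> R) a :
  filterlim f F (locally a) -> a <> 0 -> filterlim (fun t => / f t) F (locally (/ a)).
Proof.
  intros Hf Ha. apply (lim_cont f Rinv a Hf).
  apply (continuous_Rinv_comp (fun x => x) a); auto. apply continuous_id.
Qed.
Lemma lim_const (c : R) : filterlim (fun _ : T => c) F (locally c).
Proof. apply filterlim_const. Qed.



Lemma lim_Cmult (f g : T -> C) a b :
  filterlim f F (locally a) -> filterlim g F (locally b) ->
  filterlim (fun t => Cmult (f t) (g t)) F (locally (Cmult a b)).
Proof.
  intros Hf Hg. pose proof (lim_fst _ _ Hf). pose proof (lim_snd _ _ Hf).
  pose proof (lim_fst _ _ Hg). pose proof (lim_snd _ _ Hg).
  apply lim_split; destruct a, b; cunf.
  - apply lim_Rminus; apply lim_Rmult; auto.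
  - apply lim_Rplus; apply lim_Rmult; auto.
Qed.
Lemma lim_Cplus (f g : T -> C) a b :
  filterlim f F (locally a) -> filterlim g F (locally b) ->
  filterlim (fun t => Cplus (f t) (g t)) F (locally (Cplus a b)).
Proof.
  intros Hf Hg. pose proof (lim_fst _ _ Hf). pose proof (lim_snd _ _ Hf).
  pose proof (lim_fst _ _ Hg). pose proof (lim_snd _ _ Hg).
  apply lim_split; destruct a, b; cunf; apply lim_Rplus; auto.
Qed.
Lemma lim_Copp (f : T -> C) a :
  filterlim f F (locally a) -> filterlim (fun t => Copp (f t)) F (locally (Copp a)).
Proof.
  intros Hf. pose proof (lim_fst _ _ Hf). pose proof (lim_snd _ _ Hf).
  apply lim_split; destruct a; cunf; apply lim_Ropp; auto.
Qed.
Lemma lim_Cminus (f g : T -> C) a b :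
  filterlim f F (locally a) -> filterlim g F (locally b) ->
  filterlim (fun t => Cminus (f t) (g t)) F (locally (Cminus a b)).
Proof. intros. apply lim_Cplus; auto. apply lim_Copp; auto. Qed.
Lemma lim_Cconst (c : C) : filterlim (fun _ : T => c) F (locally c).
Proof. apply filterlim_const. Qed.
Lemma lim_Cexp (f : T -> C) a :
  filterlim f F (locally a) -> filterlim (fun t => Cexp (f t)) F (locally (Cexp a)).
Proof.
  intros Hf. pose proof (lim_fst _ _ Hf). pose proof (lim_snd _ _ Hf).
  apply lim_split; destruct a; cunf; apply lim_Rmult.
  all: apply lim_cont; auto.
  all: first [apply continuous_exp | apply continuous_cos | apply continuous_sin].
Qed.
Lemma lim_Cinv (f : T -> C) a :
  filterlim f F (locally a) -> a <> (0,0) -> filterlim (fun t => Cinv (f t)) F (locally (Cinv a)).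
Proof.
  intros Hf Ha. pose proof (lim_fst _ _ Hf). pose proof (lim_snd _ _ Hf).
  assert (Hn : fst a ^ 2 + snd a ^ 2 <> 0).
  { destruct a as [a1 a2]; simpl. intros E. apply Ha.
    assert (a1 = 0) by nra. assert (a2 = 0) by nra. subst; reflexivity. }
  apply lim_split; destruct a; cunf; unfold Rdiv.
  - apply lim_Rmult; auto. apply lim_Rinv; auto.
    apply lim_Rplus; apply lim_Rmult; auto; apply lim_Rmult; auto; apply lim_const.
  - apply lim_Rmult; [apply lim_Ropp; auto|]. apply lim_Rinv; auto.
    apply lim_Rplus; apply lim_Rmult; auto; apply lim_Rmult; auto; apply lim_const.
Qed.
End Lims.

Lemma Cmod_ge_abs (a b : R) : Rabs a <= Cmod (a, b).
Proof.
  unfold Cmod; simpl. rewrite <- sqrt_Rsqr_abs. apply sqrt_le_1_alt. unfold Rsqr. nra.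
Qed.

Lemma Csqrt_sq (a b : R) : 0 <= b -> Cmult (Csqrt (a, b)) (Csqrt (a, b)) = (a, b).
Proof.
  intros Hb. unfold Csqrt; simpl.
  destruct (Rle_dec 0 b) as [_|]; [|lra].
  pose proof (Cmod_ge_abs a b) as Hr.
  set (r := Cmod (a, b)) in *.
  assert (Hr2 : r * r = a * a + b * b).
  { unfold r, Cmod; simpl. rewrite sqrt_sqrt; [ring|nra]. }
  assert (H1 : 0 <= (r + a) / 2) by (pose proof (Rle_abs (-a)); rewrite Rabs_Ropp in *; lra).
  assert (H2 : 0 <= (r - a) / 2) by (pose proof (Rle_abs a); lra).
  cunf. f_equal.
  - rewrite !Rmult_1_l. rewrite !sqrt_sqrt by lra. field.
  - rewrite !Rmult_1_l.
    assert (E : sqrt ((r + a) / 2) * sqrt ((r - a) / 2) = b / 2).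
    { rewrite <- sqrt_mult_alt by lra.
      replace ((r + a) / 2 * ((r - a) / 2)) with ((b/2) * (b/2)) by (field_simplify; nra).
      rewrite sqrt_square by lra. reflexivity. }
    rewrite (Rmult_comm (sqrt ((r - a) / 2))), E. field.
Qed.

Lemma Csqrt_im_pos (a b : R) : 0 < b -> 0 < snd (Csqrt (a, b)).
Proof.
  intros Hb. unfold Csqrt; simpl. destruct (Rle_dec 0 b); [|lra].
  rewrite Rmult_1_l. apply sqrt_lt_R0.
  assert (Rabs a < Cmod (a,b)).
  { unfold Cmod; simpl. rewrite <- sqrt_Rsqr_abs. apply sqrt_lt_1_alt. unfold Rsqr. split; nra. }
  pose proof (Rle_abs a). lra.
Qed.
Lemma Csqrt_re_nonneg (a b : R) : 0 <= fst (Csqrt (a, b)).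
Proof. unfold Csqrt; simpl. apply sqrt_pos. Qed.

Lemma is_derive_imul (c : C) (s x : R) :
  is_derive (fun t : R => Cmult (0, s * t) c) x (Cmult (0, s) c).
Proof.
  apply is_derive_C_split; destruct c as [c1 c2]; cunf.
  - eapply Rd_eq. apply (Rd_minus _ _ x _ _ (Rd_mult _ _ x _ _ (is_derive_const 0 x) (is_derive_const c1 x))
      (Rd_mult _ _ x _ _ (is_derive_scal _ x s _ (is_derive_id x)) (is_derive_const c2 x))).
    unfold zero, one; simpl. ring.
  - eapply Rd_eq. apply (Rd_plus _ _ x _ _ (Rd_mult _ _ x _ _ (is_derive_const 0 x) (is_derive_const c2 x))
      (Rd_mult _ _ x _ _ (is_derive_scal _ x s _ (is_derive_id x)) (is_derive_const c1 x))).
    unfold zero, one; simpl. ring.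
Qed.

Lemma is_derive_unique_C (f : R -> C) x l1 l2 :
  is_derive f x l1 -> is_derive f x l2 -> l1 = l2.
Proof.
  intros H1 H2.
  pose proof (is_derive_unique _ _ _ (is_derive_fst _ _ _ H1)) as A1.
  pose proof (is_derive_unique _ _ _ (is_derive_fst _ _ _ H2)) as A2.
  pose proof (is_derive_unique _ _ _ (is_derive_snd _ _ _ H1)) as B1.
  pose proof (is_derive_unique _ _ _ (is_derive_snd _ _ _ H2)) as B2.
  destruct l1, l2; simpl in *. f_equal; congruence.
Qed.

Lemma right_eq (f g : R -> C) d :
  continuous f d -> continuous g d -> (forall x, d < x -> f x = g x) -> f d = g d.
Proof.
  intros Hf Hg E.
  assert (Lf : filterlim f (at_right d) (locally (f d))).
  { intros P HP. specialize (Hf P HP). destruct Hf as [eps He]. exists eps. intros y Hy _. apply He; auto. }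
  assert (Lg : filterlim f (at_right d) (locally (g d))).
  { eapply filterlim_ext_loc; [|].
    2:{ intros P HP. specialize (Hg P HP). destruct Hg as [eps He]. exists eps. intros y Hy _. apply He; exact Hy. }
    exists (mkposreal 1 Rlt_0_1). intros y _ Hy. symmetry. apply E; auto. }
  exact (@filterlim_locally_unique _ R_AbsRing C_R_NormedModule _ (Proper_StrongProper _ (at_right_proper_filter d)) f _ _ Lf Lg).
Qed.

Lemma cont_fst (g : R -> C) x : continuous g x -> continuity_pt (fun t => fst (g t)) x.
Proof. intros H. apply continuity_pt_filterlim. exact (lim_fst _ _ H). Qed.
Lemma cont_snd (g : R -> C) x : continuous g x -> continuity_pt (fun t => snd (g t)) x.
Proof. intros H. apply continuity_pt_filterlim. exact (lim_snd _ _ H). Qed.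

Lemma const_R (g : R -> R) a b : a < b -> (forall x, a < x < b -> is_derive g x 0) ->
  (forall x, a <= x <= b -> continuity_pt g x) -> g a = g b.
Proof.
  intros Hab Hd Hc.
  destruct (MVT_gen g a b (fun _ => 0)) as [c [_ Hc']].
  - rewrite Rmin_left, Rmax_right by lra. auto.
  - rewrite Rmin_left, Rmax_right by lra. auto.
  - lra.
Qed.

Lemma const_C (g : R -> C) a b : a < b -> (forall x, a < x < b -> is_derive g x (0,0)) ->
  (forall x, a <= x <= b -> continuous g x) -> g a = g b.
Proof.
  intros Hab Hd Hc.
  assert (E1 : fst (g a) = fst (g b)).
  { apply (const_R (fun t => fst (g t))); auto.
    - intros x Hx. exact (is_derive_fst _ _ _ (Hd x Hx)).
    - intros x Hx. apply cont_fst; auto. }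
  assert (E2 : snd (g a) = snd (g b)).
  { apply (const_R (fun t => snd (g t))); auto.
    - intros x Hx. exact (is_derive_snd _ _ _ (Hd x Hx)).
    - intros x Hx. apply cont_snd; auto. }
  destruct (g a), (g b); simpl in *; subst; reflexivity.
Qed.

Lemma deriv_cont (f : R -> C) x l : is_derive f x l -> continuous f x.
Proof. intros H. exact (@ex_derive_continuous R_AbsRing C_R_NormedModule f x (ex_intro _ l H)). Qed.

Lemma is_derive_Cplus (f g : R -> C) x a b :
  is_derive f x a -> is_derive g x b -> is_derive (fun t => Cplus (f t) (g t)) x (Cplus a b).
Proof.
  intros Hf Hg.
  pose proof (is_derive_fst _ _ _ Hf) as f1. pose proof (is_derive_snd _ _ _ Hf) as f2.
  pose proof (is_derive_fst _ _ _ Hg) as g1. pose proof (is_derive_snd _ _ _ Hg) as g2.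
  apply is_derive_C_split.
  - apply (is_derive_ext (fun t => fst (f t) + fst (g t))).
    intros t; destruct (f t), (g t); reflexivity.
    eapply Rd_eq. apply (Rd_plus _ _ x _ _ f1 g1). destruct a, b; reflexivity.
  - apply (is_derive_ext (fun t => snd (f t) + snd (g t))).
    intros t; destruct (f t), (g t); reflexivity.
    eapply Rd_eq. apply (Rd_plus _ _ x _ _ f2 g2). destruct a, b; reflexivity.
Qed.

Lemma is_derive_Cconst (c : C) x : is_derive (fun _ : R => c) x (0,0).
Proof. exact (@is_derive_const R_AbsRing C_R_NormedModule c x). Qed.

Lemma lin_cont (c : C) x : continuous (fun t : R => Cexp (Cmult c (t, 0))) x.
Proof. eapply deriv_cont. apply is_derive_Cexp. apply (is_derive_lin c c x). Qed.

Lemma interior (u u' : R -> C) (m nu : C) a b : a < b ->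
  (forall x, is_derive u x (u' x)) -> (forall x, continuous u' x) ->
  (forall x, a < x < b -> is_derive u' x (Copp (Cmult m (u x)))) ->
  Cmult nu nu = Copp m ->
  Cmult (Cplus (u' a) (Cmult nu (u a))) (Cexp (Cmult (Copp nu) (a, 0))) =
  Cmult (Cplus (u' b) (Cmult nu (u b))) (Cexp (Cmult (Copp nu) (b, 0))).
Proof.
  intros Hab Hu Hu' Hi Hnu.
  apply (const_C (fun t => Cmult (Cplus (u' t) (Cmult nu (u t))) (Cexp (Cmult (Copp nu) (t,0))))); auto.
  - intros x Hx.
    eapply is_derive_C_eq.
    apply is_derive_Cmult.
    apply is_derive_Cplus. apply (Hi x Hx).
    apply is_derive_Cmult. apply is_derive_Cconst. apply Hu.
    apply is_derive_Cexp. apply (is_derive_lin (Copp nu) nu x).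
    assert (E : m = Copp (Cmult nu nu)) by (rewrite Hnu; ring).
    rewrite E. change ((0,0) : C) with (RtoC 0). generalize (u x) (u' x) (Cexp (Cmult (Copp nu) (x, 0))). intros c1 c2 c3. ring.
  - intros x Hx. apply lim_Cmult. apply lim_Cplus. apply Hu'.
    apply lim_Cmult. apply lim_Cconst. eapply deriv_cont; apply Hu.
    apply lin_cont.
Qed.

Lemma is_derive_E (c : C) x :
  is_derive (fun t : R => Cexp (Cmult (0, t) c)) x (Cmult (Cmult (0,1) c) (Cexp (Cmult (0, x) c))).
Proof.
  apply is_derive_Cexp.
  eapply is_derive_ext; [|apply (is_derive_imul c 1 x)].
  intros t; simpl. rewrite Rmult_1_l. reflexivity.
Qed.

Lemma Cexp_mul0 (nu : C) : Cexp (Cmult (Copp nu) (0, 0)) = (1, 0).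
Proof.
  rewrite <- Cexp_0. f_equal. destruct nu; cunf. f_equal; ring.
Qed.

Lemma uplus_vals k1 k2 d xi delta u u' (nu : C) : 0 < d -> 0 < delta ->
  is_u_plus k1 k2 d xi delta u u' ->
  Cmult nu nu = Copp ((k2 ^ 2 - xi ^ 2, delta) : C) ->
  Cplus (u' 0) (Cmult nu (u 0)) =
  Cmult (Cplus (Cmult (0,1) (kappa k1 xi delta)) nu)
    (Cmult (Cexp (Cmult (0, d) (kappa k1 xi delta))) (Cexp (Cmult (Copp nu) (d, 0)))).
Proof.
  intros hd hdel [[Hu [Hu' Hi]] Hext] Hnu.
  set (ka := kappa k1 xi delta) in *.
  set (E := fun t : R => Cexp (Cmult (0, t) ka)).
  assert (Hd' : forall x, d < x -> u' x = Cmult (Cmult (0,1) ka) (E x)).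
  { intros x Hx. apply (is_derive_unique_C u x).
    apply Hu.
    apply (is_derive_ext_loc E u).
    - exists (mkposreal (x - d) ltac:(lra)). intros y Hy. symmetry. apply Hext.
      unfold ball in Hy; simpl in Hy; unfold AbsRing_ball, abs, minus, plus, opp in Hy; simpl in Hy.
      apply Rabs_lt_between in Hy. lra.
    - apply is_derive_E. }
  assert (Hud : u d = E d).
  { apply right_eq. eapply deriv_cont; apply Hu. eapply deriv_cont; apply is_derive_E.
    intros; apply Hext; auto. }
  assert (Hud' : u' d = Cmult (Cmult (0,1) ka) (E d)).
  { apply (right_eq u' (fun t => Cmult (Cmult (0,1) ka) (E t))). apply Hu'.
    apply lim_Cmult. apply lim_Cconst. eapply deriv_cont; apply is_derive_E.
    intros; apply Hd'; auto. }
  pose proof (interior u u' ((k2 ^ 2 - xi ^ 2, delta) : C) nu 0 d hd Hu Hu') as I.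
  rewrite Cexp_mul0 in I.
  assert (I' : Cplus (u' 0) (Cmult nu (u 0)) = Cmult (Cplus (u' d) (Cmult nu (u d))) (Cexp (Cmult (Copp nu) (d, 0)))).
  { rewrite <- I; auto.
    - change ((1,0) : C) with (RtoC 1). ring.
    - intros x Hx. replace ((k2 ^ 2 - xi ^ 2, delta) : C) with (coef k1 k2 d xi delta x).
      apply Hi; lra.
      unfold coef, q. destruct (Rle_dec (-d) x); [|lra]. destruct (Rle_dec x d); [|lra].
      f_equal; ring. }
  rewrite I', Hud', Hud. unfold E. ring.
Qed.

Lemma is_derive_Copp (f : R -> C) x l : is_derive f x l -> is_derive (fun t => Copp (f t)) x (Copp l).
Proof.
  intros H.
  pose proof (is_derive_Cmult (fun _ => RtoC (-1)) f x (0,0) l (is_derive_Cconst _ x) H) as H2.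
  apply (is_derive_ext (fun t => Cmult (RtoC (-1)) (f t))).
  { intros t. destruct (f t); cunf; f_equal; ring. }
  eapply is_derive_C_eq; [exact H2|].
  destruct (f x), l; cunf; f_equal; ring.
Qed.

Lemma is_derive_reflect (f : R -> C) x l : is_derive f (- x) l -> is_derive (fun t => f (- t)) x (Copp l).
Proof.
  intros H. eapply is_derive_C_eq.
  apply (is_derive_comp f (fun t => - t) x l (-1)). exact H.
  eapply Rd_eq. apply (is_derive_opp (fun t => t) x 1 (is_derive_id x)). reflexivity.
  destruct l; cunf. unfold scal; simpl. unfold prod_scal; simpl. unfold scal; simpl. unfold mult; simpl. f_equal; ring.
Qed.

Lemma q_sym k1 k2 d x : 0 < d -> q k1 k2 d (- x) = q k1 k2 d x.
Proof.
  intros hd. unfold q.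
  destruct (Rle_dec (-d) (-x)), (Rle_dec (-x) d), (Rle_dec (-d) x), (Rle_dec x d); try reflexivity; lra.
Qed.

Lemma uminus_to_plus k1 k2 d xi delta um um' : 0 < d ->
  is_u_minus k1 k2 d xi delta um um' ->
  is_u_plus k1 k2 d xi delta (fun x => um (- x)) (fun x => Copp (um' (- x))).
Proof.
  intros hd [[Hu [Hu' Hi]] Hext]. split; [split; [|split]|].
  - intros x. apply is_derive_reflect. apply Hu.
  - intros x. apply lim_Copp.
    apply (filterlim_comp _ _ _ (fun t => - t) um' (locally x) (locally (- x))).
    apply (continuous_opp (fun t => t) x). apply continuous_id.
    apply Hu'.
  - intros x H1 H2. eapply is_derive_C_eq.
    apply is_derive_Copp. apply is_derive_reflect. apply Hi. lra. lra.
    unfold coef. rewrite q_sym by lra. ring.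
  - intros x Hx. rewrite Hext by lra. rewrite Ropp_involutive. reflexivity.
Qed.

Definition Ci : C := (0, 1).
Definition Aexp (d : R) (mu : C) : C := Cexp (Cmult (0, 2 * d) mu).
Definition Bexp (d : R) (mu : C) : C := Cexp (Cmult (0, - (2 * d)) mu).
Definition Phi (d : R) (ka mu : C) : C :=
  Cmult (Cexp (Cmult (0, 2 * d) ka))
    (Cplus (Cmult (Cplus (Cmult mu mu) (Cmult ka ka))
                  (Cmult (Cminus (Aexp d mu) (Bexp d mu)) (Cinv (Cmult (0, 2) mu))))
           (Cmult (Cmult (0, 2) ka) (Cmult (Cplus (Aexp d mu) (Bexp d mu)) (Cinv (2, 0))))).

Lemma solve2 (x x' nu P Q : C) : nu <> RtoC 0 ->
  Cplus x' (Cmult nu x) = P -> Cplus x' (Cmult (Copp nu) x) = Q ->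
  x = Cdiv (Cminus P Q) (Cmult (RtoC 2) nu) /\ x' = Cdiv (Cplus P Q) (RtoC 2).
Proof.
  intros Hnu H1 H2. subst P Q.
  assert (H2 : RtoC 2 <> RtoC 0) by (intros E; injection E; lra).
  split; field; auto.
Qed.

Lemma W_formula k1 k2 d xi delta up up' um um' : 0 < d -> 0 < delta ->
  is_u_plus k1 k2 d xi delta up up' -> is_u_minus k1 k2 d xi delta um um' ->
  wronskian um um' up up' 0 = Phi d (kappa k1 xi delta) (Csqrt (k2 ^ 2 - xi ^ 2, delta)).
Proof.
  intros hd hdel Hp Hm.
  pose proof (uminus_to_plus _ _ _ _ _ _ _ hd Hm) as Hv.
  set (ka := kappa k1 xi delta) in *.
  set (mu := Csqrt (k2 ^ 2 - xi ^ 2, delta)).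
  set (nu := Cmult Ci mu).
  assert (Hmu2 : Cmult mu mu = ((k2 ^ 2 - xi ^ 2, delta) : C)) by (apply Csqrt_sq; lra).
  assert (Hnu1 : Cmult nu nu = Copp ((k2 ^ 2 - xi ^ 2, delta) : C)).
  { rewrite <- Hmu2. unfold nu, Ci. generalize mu; intros [m1 m2]; cunf; f_equal; ring. }
  assert (Hnu2 : Cmult (Copp nu) (Copp nu) = Copp ((k2 ^ 2 - xi ^ 2, delta) : C)).
  { rewrite <- Hnu1. generalize nu; intros [m1 m2]; cunf; f_equal; ring. }
  assert (Hmu0 : mu <> RtoC 0).
  { intros E. pose proof (Csqrt_im_pos (k2 ^ 2 - xi ^ 2) delta hdel). fold mu in H. rewrite E in H. simpl in H. lra. }
  assert (Hnu0 : nu <> RtoC 0).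
  { intros E. apply Hmu0. unfold nu, Ci in E. revert E. generalize mu. intros [m1 m2] E. unfold RtoC in *. cunf. injection E; intros. f_equal; lra. }
  pose proof (uplus_vals _ _ _ _ _ _ _ nu hd hdel Hp Hnu1) as P1.
  pose proof (uplus_vals _ _ _ _ _ _ _ (Copp nu) hd hdel Hp Hnu2) as P2.
  pose proof (uplus_vals _ _ _ _ _ _ _ nu hd hdel Hv Hnu1) as V1.
  pose proof (uplus_vals _ _ _ _ _ _ _ (Copp nu) hd hdel Hv Hnu2) as V2.
  simpl in V1, V2. rewrite Ropp_0 in V1, V2. fold ka in P1, P2, V1, V2.
  destruct (solve2 _ _ _ _ _ Hnu0 P1 P2) as [Eu Eu'].
  destruct (solve2 _ _ _ _ _ Hnu0 V1 V2) as [Ev Ev'].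
  unfold wronskian.
  assert (Eum : um 0 = up 0) by (rewrite Ev, Eu; reflexivity).
  assert (Eum' : um' 0 = Copp (up' 0)).
  { replace (um' 0) with (Copp (Copp (um' 0))) by ring. rewrite Ev', Eu'. reflexivity. }
  rewrite Eum, Eum', Eu, Eu'.
  unfold Phi, Aexp, Bexp.
  set (a := Cexp (Cmult (0, d) ka)).
  set (b := Cexp (Cmult (Copp nu) (d, 0))).
  set (c := Cexp (Cmult (Copp (Copp nu)) (d, 0))).
  assert (Ea : Cexp (Cmult (0, 2 * d) ka) = Cmult a a).
  { unfold a. rewrite <- Cexp_add. f_equal. generalize ka; intros [x y]; cunf; f_equal; ring. }
  assert (Eb : Cexp (Cmult (0, - (2 * d)) mu) = Cmult b b).
  { unfold b. rewrite <- Cexp_add. f_equal. unfold nu, Ci. generalize mu; intros [x y]; cunf; f_equal; ring. }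
  assert (Ec : Cexp (Cmult (0, 2 * d) mu) = Cmult c c).
  { unfold c. rewrite <- Cexp_add. f_equal. unfold nu, Ci. generalize mu; intros [x y]; cunf; f_equal; ring. }
  rewrite Ea, Eb, Ec.
  unfold nu, Ci in *. clearbody a b c.
  assert (E1 : Cmult (0,2) mu = Cmult (RtoC 2) (Cmult (0,1) mu)) by (generalize mu; intros [x y]; unfold RtoC; cunf; f_equal; ring).
  assert (E2 : Cmult (0,2) ka = Cmult (RtoC 2) (Cmult (0,1) ka)) by (generalize ka; intros [x y]; unfold RtoC; cunf; f_equal; ring).
  assert (E3 : Cmult mu mu = Copp (Cmult (Cmult (0,1) mu) (Cmult (0,1) mu))) by (generalize mu; intros [x y]; cunf; f_equal; ring).
  assert (E4 : Cmult ka ka = Copp (Cmult (Cmult (0,1) ka) (Cmult (0,1) ka))) by (generalize ka; intros [x y]; cunf; f_equal; ring).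
  assert (E5 : ((2, 0) : C) = RtoC 2) by reflexivity.
  rewrite E1, E2, E3, E4, E5.
  assert (H2 : RtoC 2 <> RtoC 0) by (intros E; injection E; lra).
  revert Hnu0. generalize (Cmult (0,1) mu) (Cmult (0,1) ka). intros N K HN.
  field. auto.
Qed.

Definition Nexp (d : R) (ka mu : C) : C :=
  Cminus (Cmult (Cmult (Cminus ka mu) (Cminus ka mu)) (Aexp d mu))
         (Cmult (Cmult (Cplus ka mu) (Cplus ka mu)) (Bexp d mu)).

Lemma Phi_alt d ka mu : mu <> RtoC 0 ->
  Phi d ka mu = Cmult (Cexp (Cmult (0, 2 * d) ka)) (Cdiv (Nexp d ka mu) (Cmult (0,2) mu)).
Proof.
  intros Hmu. unfold Phi, Nexp.
  assert (Hnu0 : Cmult (0,1) mu <> RtoC 0).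
  { intros E. apply Hmu. revert E. generalize mu. intros [m1 m2] E. unfold RtoC in *. cunf. injection E; intros. f_equal; lra. }
  assert (E1 : Cmult (0,2) mu = Cmult (RtoC 2) (Cmult (0,1) mu)) by (generalize mu; intros [x y]; unfold RtoC; cunf; f_equal; ring).
  assert (E2 : Cmult (0,2) ka = Cmult (RtoC 2) (Cmult (0,1) ka)) by (generalize ka; intros [x y]; unfold RtoC; cunf; f_equal; ring).
  assert (E3 : Cmult mu mu = Copp (Cmult (Cmult (0,1) mu) (Cmult (0,1) mu))) by (generalize mu; intros [x y]; cunf; f_equal; ring).
  assert (E4 : Cmult ka ka = Copp (Cmult (Cmult (0,1) ka) (Cmult (0,1) ka))) by (generalize ka; intros [x y]; cunf; f_equal; ring).
  assert (E6 : Cmult (Cminus ka mu) (Cminus ka mu) = Copp (Cmult (Cminus (Cmult (0,1) ka) (Cmult (0,1) mu)) (Cminus (Cmult (0,1) ka) (Cmult (0,1) mu))))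
    by (generalize ka mu; intros [x y] [z w]; cunf; f_equal; ring).
  assert (E7 : Cmult (Cplus ka mu) (Cplus ka mu) = Copp (Cmult (Cplus (Cmult (0,1) ka) (Cmult (0,1) mu)) (Cplus (Cmult (0,1) ka) (Cmult (0,1) mu))))
    by (generalize ka mu; intros [x y] [z w]; cunf; f_equal; ring).
  assert (E5 : ((2, 0) : C) = RtoC 2) by reflexivity.
  rewrite E1, E2, E3, E4, E5, E6, E7.
  assert (H2 : RtoC 2 <> RtoC 0) by (intros E; injection E; lra).
  revert Hnu0. generalize (Cmult (0,1) mu) (Cmult (0,1) ka). intros N K HN.
  field. auto.
Qed.

Lemma Cmod_Cexp (z : C) : Cmod (Cexp z) = exp (fst z).
Proof.
  destruct z as [x y]. unfold Cmod, Cexp, Re, Im; simpl.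
  replace (exp x * cos y * (exp x * cos y * 1) + exp x * sin y * (exp x * sin y * 1)) with (exp x * exp x).
  rewrite sqrt_square; auto. left; apply exp_pos.
  pose proof (sin2_cos2 y). unfold Rsqr in H. nra.
Qed.

Lemma Cmod_sq_lt (ka mu : C) : 0 <= fst ka -> 0 < snd ka -> 0 <= fst mu -> 0 < snd mu ->
  Cmod (Cminus ka mu) < Cmod (Cplus ka mu).
Proof.
  destruct ka as [x y], mu as [z w]; simpl; intros.
  assert (0 <= x*z) by (apply Rmult_le_pos; auto). assert (0 < y*w) by (apply Rmult_lt_0_compat; auto).
  unfold Cmod; cunf. apply sqrt_lt_1_alt. rewrite !Rmult_1_r. split; [apply Rplus_le_le_0_compat; apply Rle_0_sqr|]. assert (forall a b : R, (a+b)*(a+b) - (a + - b)*(a + - b) = 4*a*b) by (intros; ring). pose proof (H5 x z); pose proof (H5 y w). lra.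
Qed.

Lemma Nexp_neq0 d ka mu : 0 < d -> 0 <= fst ka -> 0 < snd ka -> 0 <= fst mu -> 0 < snd mu ->
  Nexp d ka mu <> RtoC 0.
Proof.
  intros hd H1 H2 H3 H4 E. unfold Nexp in E.
  assert (E' : Cmult (Cmult (Cminus ka mu) (Cminus ka mu)) (Aexp d mu) = Cmult (Cmult (Cplus ka mu) (Cplus ka mu)) (Bexp d mu)).
  { rewrite <- (Cplus_0_r (Cmult (Cmult (Cplus ka mu) (Cplus ka mu)) (Bexp d mu))). rewrite <- E. ring. }
  apply (f_equal Cmod) in E'. rewrite !Cmod_mult in E'.
  unfold Aexp, Bexp in E'. rewrite !Cmod_Cexp in E'.
  assert (HA : fst (Cmult (0, 2 * d) mu) < 0) by (destruct mu; simpl in *; nra).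
  assert (HB : 0 < fst (Cmult (0, - (2 * d)) mu)) by (destruct mu; simpl in *; nra).
  pose proof (exp_increasing _ _ HA) as EA. pose proof (exp_increasing _ _ HB) as EB. rewrite exp_0 in EA, EB.
  pose proof (Cmod_sq_lt ka mu H1 H2 H3 H4) as Hl.
  pose proof (Cmod_ge_0 (Cminus ka mu)).
  set (p := Cmod (Cplus ka mu)) in *. set (m := Cmod (Cminus ka mu)) in *.
  set (ea := exp (fst (Cmult (0, 2 * d) mu))) in *. set (eb := exp (fst (Cmult (0, - (2 * d)) mu))) in *.
  assert (0 < ea) by apply exp_pos.
  assert (m * m * ea < p * p * eb).
  { apply Rle_lt_trans with (p * p * ea). apply Rmult_le_compat_r; nra.
    apply Rmult_lt_compat_l; nra. }
  lra.
Qed.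

Definition kt (a delta : R) : C :=
  (sqrt ((sqrt (a ^ 2 + delta ^ 2) + a) / 2), sqrt ((sqrt (a ^ 2 + delta ^ 2) - a) / 2)).

Lemma Csqrt_kt a delta : 0 <= delta -> Csqrt (a, delta) = kt a delta.
Proof.
  intros H. unfold Csqrt, kt, Cmod; simpl.
  destruct (Rle_dec 0 delta); [|lra]. rewrite Rmult_1_l. reflexivity.
Qed.

Lemma at_right_le_locally (x : R) : filterlim (fun t => t) (at_right x) (locally x).
Proof.
  intros P [eps HP]. exists eps. intros y Hy _. apply HP. exact Hy.
Qed.

Lemma lim_kt a : filterlim (kt a) (at_right 0) (locally (kt a 0)).
Proof.
  pose proof (at_right_le_locally 0) as Hid.
  unfold kt. apply lim_C.
  all: apply lim_cont; [|apply continuous_sqrt].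
  all: unfold Rdiv; apply lim_Rmult; [|apply lim_const].
  all: try apply lim_Rplus; try apply lim_Rminus; try apply lim_const.
  all: apply lim_cont; [|apply continuous_sqrt].
  all: apply lim_Rplus; [apply lim_const|].
  all: simpl; apply lim_Rmult; auto; apply lim_Rmult; auto; apply lim_const.
Qed.

Definition Shat (d : R) (mu : C) : C := Cmult (Cminus (Aexp d mu) (Bexp d mu)) (Cinv (Cmult (0, 2) mu)).
Definition Phi_gen (d : R) (ka mu S : C) : C :=
  Cmult (Cexp (Cmult (0, 2 * d) ka))
    (Cplus (Cmult (Cplus (Cmult mu mu) (Cmult ka ka)) S)
           (Cmult (Cmult (0, 2) ka) (Cmult (Cplus (Aexp d mu) (Bexp d mu)) (Cinv (2, 0))))).

Lemma Phi_Phi_gen d ka mu : Phi d ka mu = Phi_gen d ka mu (Shat d mu).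
Proof. reflexivity. Qed.

Section LimPhi.
Context {T : Type} {F : (T -> Prop) -> Prop} {FF : Filter F}.
Lemma lim_Aexp d (f : T -> C) a : filterlim f F (locally a) -> filterlim (fun t => Aexp d (f t)) F (locally (Aexp d a)).
Proof. intros H. apply lim_Cexp. apply lim_Cmult; auto. apply lim_Cconst. Qed.
Lemma lim_Bexp d (f : T -> C) a : filterlim f F (locally a) -> filterlim (fun t => Bexp d (f t)) F (locally (Bexp d a)).
Proof. intros H. apply lim_Cexp. apply lim_Cmult; auto. apply lim_Cconst. Qed.
Lemma lim_Phi_gen d (k m s : T -> C) k0 m0 s0 :
  filterlim k F (locally k0) -> filterlim m F (locally m0) -> filterlim s F (locally s0) ->
  filterlim (fun t => Phi_gen d (k t) (m t) (s t)) F (locally (Phi_gen d k0 m0 s0)).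
Proof.
  intros Hk Hm Hs. unfold Phi_gen.
  apply lim_Cmult. apply lim_Cexp. apply lim_Cmult; auto. apply lim_Cconst.
  apply lim_Cplus. apply lim_Cmult; auto. apply lim_Cplus; apply lim_Cmult; auto.
  apply lim_Cmult. apply lim_Cmult; auto. apply lim_Cconst.
  apply lim_Cmult. apply lim_Cplus. apply lim_Aexp; auto. apply lim_Bexp; auto. apply lim_Cconst.
Qed.
Lemma lim_Shat d (m : T -> C) m0 : filterlim m F (locally m0) -> m0 <> (0,0) ->
  filterlim (fun t => Shat d (m t)) F (locally (Shat d m0)).
Proof.
  intros Hm H0. unfold Shat. apply lim_Cmult. apply lim_Cminus. apply lim_Aexp; auto. apply lim_Bexp; auto.
  apply lim_Cinv. apply lim_Cmult; auto. apply lim_Cconst.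
  destruct m0 as [x y]. cunf. intros E. injection E as E1 E2. apply H0. f_equal; lra.
Qed.
End LimPhi.

Lemma quot_lim_R (g : R -> R) l : is_derive g 0 l -> g 0 = 0 ->
  filterlim (fun s => g s / s) (at_right 0) (locally l).
Proof.
  intros H H0. apply is_derive_Reals in H.
  intros P [eps HP]. destruct (H eps (cond_pos eps)) as [del Hdel].
  exists del. intros y Hy Hpos. apply HP.
  unfold ball in Hy |- *; simpl in *. unfold AbsRing_ball, abs, minus, plus, opp in *; simpl in *.
  rewrite Ropp_0, Rplus_0_r in Hy. assert (Hy' : Rabs y < del) by exact Hy.
  specialize (Hdel y ltac:(lra) Hy'). rewrite Rplus_0_l, H0, Rminus_0_r in Hdel. exact Hdel.
Qed.

Lemma quot_lim_C (f : R -> C) (l : C) : is_derive f 0 l -> f 0 = (0,0) ->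
  filterlim (fun s => Cmult (f s) (/ s, 0)) (at_right 0) (locally l).
Proof.
  intros H H0. apply lim_split.
  - eapply filterlim_ext; [|apply (quot_lim_R (fun s => fst (f s)))].
    intros s. cunf. unfold Rdiv. ring.
    apply is_derive_fst; auto. rewrite H0; reflexivity.
  - eapply filterlim_ext; [|apply (quot_lim_R (fun s => snd (f s)))].
    intros s. cunf. unfold Rdiv. ring.
    apply is_derive_snd; auto. rewrite H0; reflexivity.
Qed.

Lemma lim_at_right {T} {F : (T -> Prop) -> Prop} {FF : Filter F} (s : T -> R) :
  filterlim s F (locally 0) -> F (fun x => 0 < s x) -> filterlim s F (at_right 0).
Proof.
  intros H Hp P [eps HP].
  assert (H1 : F (fun x => ball 0 eps (s x))) by exact (H (ball 0 eps) (locally_ball 0 eps)).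
  unfold filtermap.
  apply (filter_imp (fun x => ball 0 eps (s x) /\ 0 < s x)).
  intros x [A B]. apply HP; auto.
  apply filter_and; auto.
Qed.

Definition Gq (d t : R) : C := Cminus (Aexp d (t, t)) (Bexp d (t, t)).

Lemma Gq_derive d : is_derive (Gq d) 0 ((- (4 * d), 4 * d) : C).
Proof.
  unfold Gq, Aexp, Bexp.
  apply (is_derive_ext (fun t => Cminus (Cexp (Cmult ((- (2*d), 2*d) : C) (t, 0))) (Cexp (Cmult ((2*d, - (2*d)) : C) (t, 0))))).
  { intros t. f_equal; f_equal; cunf; f_equal; ring. }
  eapply is_derive_C_eq.
  apply is_derive_Cplus. apply is_derive_Cexp. apply (is_derive_lin _ (0,0) 0).
  apply is_derive_Copp. apply is_derive_Cexp. apply (is_derive_lin _ (0,0) 0).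
  cunf. rewrite ?Rmult_0_r, ?Rmult_0_l, ?Rminus_0_r, ?Rplus_0_r, ?exp_0, ?cos_0, ?sin_0. f_equal; ring.
Qed.

Lemma Gq_0 d : Gq d 0 = (0,0).
Proof. unfold Gq, Aexp, Bexp. cunf. rewrite ?Rmult_0_r, ?Rmult_0_l, ?Rminus_0_r, ?Rplus_0_r, ?Ropp_0, ?exp_0, ?cos_0, ?sin_0. f_equal; ring. Qed.

Lemma Shat_diag d t : 0 < t -> Shat d (t, t) = Cmult (Cmult (Gq d t) (/ t, 0)) (Cinv (- 2, 2)).
Proof.
  intros Ht. unfold Shat, Gq.
  assert (E : Cmult (0, 2) (t, t) = Cmult (RtoC t) (-2, 2)) by (unfold RtoC; cunf; f_equal; ring).
  rewrite E.
  assert (E2 : ((/ t, 0) : C) = Cinv (RtoC t)) by (unfold RtoC; cunf; f_equal; field; lra).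
  rewrite E2.
  assert (Ht' : RtoC t <> RtoC 0) by (intros Q; injection Q; lra).
  assert (H2 : ((-2, 2) : C) <> RtoC 0) by (intros Q; injection Q; lra).
  field. auto.
Qed.

Lemma lim_Shat_0 d :
  filterlim (fun delta => Shat d (kt 0 delta)) (at_right 0) (locally ((2 * d, 0) : C)).
Proof.
  set (s := fun delta : R => sqrt ((sqrt (0 ^ 2 + delta ^ 2) + 0) / 2)).
  assert (Hs : forall delta, kt 0 delta = (s delta, s delta)).
  { intros delta. unfold kt, s. f_equal. f_equal. f_equal. ring. }
  assert (Hpos : at_right 0 (fun delta => 0 < s delta)).
  { exists (mkposreal 1 Rlt_0_1). intros y _ Hy. unfold s. apply sqrt_lt_R0.
    rewrite Rplus_0_r. apply Rdiv_lt_0_compat; [|lra]. apply sqrt_lt_R0. simpl. nra. }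
  assert (Hs0 : filterlim s (at_right 0) (at_right 0)).
  { apply lim_at_right; auto.
    replace 0 with (s 0) at 2.
    2:{ unfold s. simpl. rewrite !Rmult_0_l, Rplus_0_l, Rplus_0_r, sqrt_0. unfold Rdiv. rewrite Rmult_0_l. apply sqrt_0. }
    pose proof (lim_kt 0) as L. apply lim_fst in L.
    eapply filterlim_ext; [|exact L]. intros x. reflexivity. }
  apply (filterlim_ext_loc (fun delta => Cmult (Cmult (Gq d (s delta)) (/ s delta, 0)) (Cinv (-2, 2)))).
  { apply (filter_imp (fun delta => 0 < s delta)); auto. intros x Hx. rewrite Hs. symmetry. apply Shat_diag; auto. }
  replace ((2 * d, 0) : C) with (Cmult ((- (4 * d), 4 * d) : C) (Cinv (-2, 2))).
  2:{ cunf. f_equal; field. }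
  apply lim_Cmult; [|apply lim_Cconst].
  apply (filterlim_comp _ _ _ s (fun t => Cmult (Gq d t) (/ t, 0)) _ (at_right 0)); auto.
  apply quot_lim_C. apply Gq_derive. apply Gq_0.
Qed.

Lemma kt_0 a : kt a 0 = (sqrt ((Rabs a + a) / 2), sqrt ((Rabs a - a) / 2)).
Proof.
  unfold kt. replace (a ^ 2 + 0 ^ 2) with (Rsqr a) by (unfold Rsqr; ring).
  rewrite sqrt_Rsqr_abs. reflexivity.
Qed.
Lemma kt_pos a : 0 < a -> kt a 0 = (sqrt a, 0).
Proof.
  intros H. rewrite kt_0, Rabs_pos_eq by lra. f_equal. f_equal; field.
  replace ((a - a) / 2) with 0 by field. apply sqrt_0.
Qed.
Lemma kt_neg a : a < 0 -> kt a 0 = (0, sqrt (- a)).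
Proof.
  intros H. rewrite kt_0, Rabs_left by lra. f_equal.
  replace ((- a + a) / 2) with 0 by field. apply sqrt_0. f_equal; field.
Qed.
Lemma kt_zero : kt 0 0 = (0, 0).
Proof. rewrite kt_0, Rabs_R0. replace ((0 + 0) / 2) with 0 by field. replace ((0 - 0) / 2) with 0 by field. rewrite sqrt_0. reflexivity. Qed.
Lemma kt_neq0 a : a <> 0 -> kt a 0 <> (0, 0).
Proof.
  intros H E. destruct (Rlt_or_le a 0) as [Hl|Hl].
  - rewrite kt_neg in E by auto. injection E as E. pose proof (sqrt_lt_R0 (- a) ltac:(lra)). lra.
  - rewrite kt_pos in E by lra. injection E as E. pose proof (sqrt_lt_R0 a ltac:(lra)). lra.
Qed.

Definition S0 (k2 d xi : R) : C :=
  if Req_EM_T (k2 ^ 2 - xi ^ 2) 0 then ((2 * d, 0) : C) else Shat d (kt (k2 ^ 2 - xi ^ 2) 0).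
Definition W0f (k1 k2 d xi : R) : C :=
  Phi_gen d (kt (k1 ^ 2 - xi ^ 2) 0) (kt (k2 ^ 2 - xi ^ 2) 0) (S0 k2 d xi).

Lemma W_limit k1 k2 d xi (up up' um um' : R -> R -> R -> C) : 0 < d ->
  (forall xi delta, 0 < delta -> is_u_plus k1 k2 d xi delta (up xi delta) (up' xi delta)) ->
  (forall xi delta, 0 < delta -> is_u_minus k1 k2 d xi delta (um xi delta) (um' xi delta)) ->
  filterlim (fun delta => wronskian (um xi delta) (um' xi delta) (up xi delta) (up' xi delta) 0)
    (at_right 0) (locally (W0f k1 k2 d xi)).
Proof.
  intros hd Hp Hm.
  apply (filterlim_ext_loc (fun delta => Phi_gen d (kt (k1 ^ 2 - xi ^ 2) delta) (kt (k2 ^ 2 - xi ^ 2) delta) (Shat d (kt (k2 ^ 2 - xi ^ 2) delta)))).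
  { exists (mkposreal 1 Rlt_0_1). intros y _ Hy. rewrite (W_formula k1 k2 d xi y); auto.
    unfold kappa. rewrite !Csqrt_kt by lra. reflexivity. }
  unfold W0f. apply lim_Phi_gen; try apply lim_kt.
  unfold S0. destruct (Req_EM_T (k2 ^ 2 - xi ^ 2) 0) as [e|n].
  - rewrite e. apply lim_Shat_0.
  - apply lim_Shat. apply lim_kt. apply kt_neq0; auto.
Qed.

Lemma W_pos_neq0 k1 k2 d xi delta up up' um um' : 0 < d -> 0 < delta ->
  is_u_plus k1 k2 d xi delta up up' -> is_u_minus k1 k2 d xi delta um um' ->
  wronskian um um' up up' 0 <> RtoC 0.
Proof.
  intros hd hdel Hp Hm. rewrite (W_formula k1 k2 d xi delta); auto.
  set (ka := kappa k1 xi delta). set (mu := Csqrt (k2 ^ 2 - xi ^ 2, delta)).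
  assert (Hmu0 : mu <> RtoC 0).
  { intros E. pose proof (Csqrt_im_pos (k2 ^ 2 - xi ^ 2) delta hdel). fold mu in H. rewrite E in H. simpl in H. lra. }
  rewrite Phi_alt by auto.
  intros E. apply (f_equal Cmod) in E. rewrite Cmod_mult, Cmod_0 in E.
  apply Rmult_integral in E. destruct E as [E|E].
  - rewrite Cmod_Cexp in E. pose proof (exp_pos (fst (Cmult (0, 2 * d) ka))). lra.
  - apply Cmod_eq_0 in E. unfold Cdiv in E.
    assert (Hi : Cmult (0, 2) mu <> RtoC 0).
    { intros Q. apply Hmu0. revert Q. generalize mu. intros [m1 m2] Q. unfold RtoC in *. cunf. injection Q; intros. f_equal; lra. }
    apply (Nexp_neq0 d ka mu hd).
    + apply Csqrt_re_nonneg.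
    + apply Csqrt_im_pos; auto.
    + apply Csqrt_re_nonneg.
    + apply Csqrt_im_pos; auto.
    + replace (Nexp d ka mu) with (Cmult (Cmult (Nexp d ka mu) (Cinv (Cmult (0, 2) mu))) (Cmult (0, 2) mu)).
      * rewrite E. ring.
      * field. split; auto. intros Q; injection Q; lra.
Qed.

Lemma kt_nonneg a : 0 <= a -> kt a 0 = (sqrt a, 0).
Proof.
  intros H. destruct H as [H|H]. apply kt_pos; auto. subst. rewrite kt_zero, sqrt_0. reflexivity.
Qed.

Lemma Aexp_real d m : Aexp d (m, 0) = (cos (2 * d * m), sin (2 * d * m)).
Proof. unfold Aexp. replace (Cmult (0, 2 * d) (m, 0)) with ((0, 2 * d * m) : C) by (cunf; f_equal; ring).
  cunf. rewrite exp_0. f_equal; ring. Qed.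
Lemma Bexp_real d m : Bexp d (m, 0) = (cos (2 * d * m), - sin (2 * d * m)).
Proof. unfold Bexp. replace (Cmult (0, - (2 * d)) (m, 0)) with ((0, - (2 * d * m)) : C) by (cunf; f_equal; ring).
  cunf. rewrite exp_0, cos_neg, sin_neg. f_equal; ring. Qed.
Lemma Aexp_imag d b : Aexp d (0, b) = (exp (- (2 * d * b)), 0).
Proof. unfold Aexp. replace (Cmult (0, 2 * d) (0, b)) with ((- (2 * d * b), 0) : C) by (cunf; f_equal; ring).
  cunf. rewrite cos_0, sin_0. f_equal; ring. Qed.
Lemma Bexp_imag d b : Bexp d (0, b) = (exp (2 * d * b), 0).
Proof. unfold Bexp. replace (Cmult (0, - (2 * d)) (0, b)) with ((2 * d * b, 0) : C) by (cunf; f_equal; ring).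
  cunf. rewrite cos_0, sin_0. f_equal; ring. Qed.
Lemma Eexp_real d c : Cexp (Cmult (0, 2 * d) (c, 0)) = (cos (2 * d * c), sin (2 * d * c)).
Proof. exact (Aexp_real d c). Qed.
Lemma Eexp_imag d g : Cexp (Cmult (0, 2 * d) (0, g)) = (exp (- (2 * d * g)), 0).
Proof. exact (Aexp_imag d g). Qed.

Lemma Shat_real d m : m <> 0 -> Shat d (m, 0) = (sin (2 * d * m) / m, 0).
Proof.
  intros Hm. unfold Shat. rewrite Aexp_real, Bexp_real. cunf. f_equal; field; auto.
Qed.
Lemma Shat_imag d b : b <> 0 -> Shat d (0, b) = ((exp (2 * d * b) - exp (- (2 * d * b))) / (2 * b), 0).
Proof.
  intros Hm. unfold Shat. rewrite Aexp_imag, Bexp_imag. cunf. f_equal; field; auto.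
Qed.

Section Regions.
Variables k1 k2 d : R.
Hypothesis hk1 : 0 < k1.
Hypothesis hk12 : k1 < k2.
Hypothesis hd : 0 < d.

Lemma W0_even xi : W0f k1 k2 d (- xi) = W0f k1 k2 d xi.
Proof. unfold W0f, S0. replace ((- xi) ^ 2) with (xi ^ 2) by ring. reflexivity. Qed.

Lemma W0_R1 xi : 0 <= k1 ^ 2 - xi ^ 2 ->
  let c := sqrt (k1 ^ 2 - xi ^ 2) in let m := sqrt (k2 ^ 2 - xi ^ 2) in
  W0f k1 k2 d xi = Cmult (cos (2 * d * c), sin (2 * d * c))
     (((m * m + c * c) * (sin (2 * d * m) / m)), 2 * c * cos (2 * d * m)).
Proof.
  intros H c m.
  assert (Ha2 : 0 < k2 ^ 2 - xi ^ 2) by nra.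
  assert (Hm : 0 < m) by (apply sqrt_lt_R0; auto).
  unfold W0f, S0. destruct (Req_EM_T (k2 ^ 2 - xi ^ 2) 0) as [e|_]; [lra|].
  rewrite (kt_nonneg (k1 ^ 2 - xi ^ 2)), (kt_pos (k2 ^ 2 - xi ^ 2)) by lra. fold c m.
  unfold Phi_gen. rewrite Shat_real, Eexp_real, Aexp_real, Bexp_real by lra.
  f_equal. cunf. f_equal; field; lra.
Qed.

Lemma W0_R1_neq0 xi : 0 <= k1 ^ 2 - xi ^ 2 ->
  (forall n : nat, (1 <= n)%nat -> 2 * d * sqrt (k2 ^ 2 - k1 ^ 2) <> INR n * PI) ->
  W0f k1 k2 d xi <> RtoC 0.
Proof.
  intros H hres. rewrite W0_R1 by auto.
  set (c := sqrt (k1 ^ 2 - xi ^ 2)). set (m := sqrt (k2 ^ 2 - xi ^ 2)).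
  assert (Ha2 : 0 < k2 ^ 2 - xi ^ 2) by nra.
  assert (Hm : 0 < m) by (apply sqrt_lt_R0; auto).
  assert (Hc : 0 <= c) by apply sqrt_pos.
  intros E. apply (f_equal Cmod) in E. rewrite Cmod_mult, Cmod_0 in E.
  apply Rmult_integral in E. destruct E as [E|E].
  - apply Cmod_eq_0 in E. injection E as E1 E2. apply (cos_sin_0 (2 * d * c)); auto.
  - apply Cmod_eq_0 in E. injection E as E1 E2.
    assert (Hs : sin (2 * d * m) = 0).
    { apply Rmult_integral in E1. destruct E1 as [E1|E1]; [nra|].
      unfold Rdiv in E1. apply Rmult_integral in E1. destruct E1 as [E1|E1]; [exact E1|].
      exfalso. apply (Rinv_neq_0_compat m); lra. }
    destruct Hc as [Hc|Hc].
    + assert (cos (2 * d * m) = 0) by (apply Rmult_integral in E2; destruct E2; [lra|auto]).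
      apply (cos_sin_0 (2*d*m)). auto.
    +
      assert (Hx : k1 ^ 2 - xi ^ 2 = 0).
      { unfold c in Hc. symmetry in Hc. apply sqrt_eq_0 in Hc; lra. }
      assert (Em : m = sqrt (k2 ^ 2 - k1 ^ 2)) by (unfold m; f_equal; lra).
      apply sin_eq_0_0 in Hs. destruct Hs as [k Hk].
      assert (Hpos : 0 < 2 * d * m) by nra.
      assert (Hk1 : (1 <= k)%Z).
      { destruct (Z_lt_le_dec k 1) as [l|l]; auto. exfalso.
        assert (IZR k <= 0) by (apply IZR_le; lia). pose proof PI_RGT_0. nra. }
      apply (hres (Z.to_nat k)). lia.
      rewrite <- Em, Hk. rewrite INR_IZR_INZ, Z2Nat.id by lia. reflexivity.
Qed.

Lemma W0_R3 xi : k2 ^ 2 - xi ^ 2 = 0 ->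
  let g := sqrt (- (k1 ^ 2 - xi ^ 2)) in
  W0f k1 k2 d xi = ((exp (- (2 * d * g)) * (- (g * g) * (2 * d) - 2 * g)), 0).
Proof.
  intros H g.
  unfold W0f, S0. destruct (Req_EM_T (k2 ^ 2 - xi ^ 2) 0) as [_|n]; [|lra].
  rewrite (kt_neg (k1 ^ 2 - xi ^ 2)) by nra. rewrite H, kt_zero. fold g.
  unfold Phi_gen. rewrite Eexp_imag.
  replace ((0, 0) : C) with ((0, 0) : C) by reflexivity.
  rewrite Aexp_real, Bexp_real. rewrite Rmult_0_r, cos_0, sin_0.
  cunf. f_equal; field.
Qed.

Lemma W0_R4 xi : k2 ^ 2 - xi ^ 2 < 0 ->
  let g := sqrt (- (k1 ^ 2 - xi ^ 2)) in let b := sqrt (- (k2 ^ 2 - xi ^ 2)) in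
  W0f k1 k2 d xi = ((exp (- (2 * d * g)) *
     (- (b * b + g * g) * ((exp (2 * d * b) - exp (- (2 * d * b))) / (2 * b))
      - g * (exp (- (2 * d * b)) + exp (2 * d * b)))), 0).
Proof.
  intros H g b.
  assert (Hb : 0 < b) by (apply sqrt_lt_R0; lra).
  unfold W0f, S0. destruct (Req_EM_T (k2 ^ 2 - xi ^ 2) 0) as [e|_]; [lra|].
  rewrite (kt_neg (k1 ^ 2 - xi ^ 2)) by nra. rewrite (kt_neg (k2 ^ 2 - xi ^ 2)) by lra. fold g b.
  unfold Phi_gen. rewrite Eexp_imag, Shat_imag, Aexp_imag, Bexp_imag by lra.
  cunf. f_equal; field; lra.
Qed.

Lemma W0_R2 xi : k1 ^ 2 - xi ^ 2 < 0 -> 0 < k2 ^ 2 - xi ^ 2 ->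
  let g := sqrt (- (k1 ^ 2 - xi ^ 2)) in let m := sqrt (k2 ^ 2 - xi ^ 2) in
  W0f k1 k2 d xi = ((exp (- (2 * d * g)) *
     ((m * m - g * g) * (sin (2 * d * m) / m) - 2 * g * cos (2 * d * m))), 0).
Proof.
  intros H1 H2 g m.
  assert (Hm : 0 < m) by (apply sqrt_lt_R0; lra).
  unfold W0f, S0. destruct (Req_EM_T (k2 ^ 2 - xi ^ 2) 0) as [e|_]; [lra|].
  rewrite (kt_neg (k1 ^ 2 - xi ^ 2)) by lra. rewrite (kt_pos (k2 ^ 2 - xi ^ 2)) by lra. fold g m.
  unfold Phi_gen. rewrite Eexp_imag, Shat_real, Aexp_real, Bexp_real by lra.
  cunf. f_equal; field; lra.
Qed.

Lemma W0_R3_neq0 xi : k2 ^ 2 - xi ^ 2 = 0 -> W0f k1 k2 d xi <> RtoC 0.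
Proof.
  intros H. rewrite W0_R3 by auto.
  set (g := sqrt (- (k1 ^ 2 - xi ^ 2))).
  assert (Hg : 0 < g) by (apply sqrt_lt_R0; nra).
  intros E. injection E as E. apply Rmult_integral in E. destruct E as [E|E].
  pose proof (exp_pos (- (2 * d * g))); lra. nra.
Qed.

Lemma W0_R4_neq0 xi : k2 ^ 2 - xi ^ 2 < 0 -> W0f k1 k2 d xi <> RtoC 0.
Proof.
  intros H. rewrite W0_R4 by auto.
  set (g := sqrt (- (k1 ^ 2 - xi ^ 2))). set (b := sqrt (- (k2 ^ 2 - xi ^ 2))).
  assert (Hg : 0 < g) by (apply sqrt_lt_R0; nra).
  assert (Hb : 0 < b) by (apply sqrt_lt_R0; nra).
  assert (He : exp (- (2 * d * b)) < exp (2 * d * b)) by (apply exp_increasing; nra).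
  pose proof (exp_pos (- (2 * d * b))).
  assert (Q : 0 < (exp (2 * d * b) - exp (- (2 * d * b))) / (2 * b)) by (apply Rdiv_lt_0_compat; lra).
  intros E. injection E as E. apply Rmult_integral in E. destruct E as [E|E].
  pose proof (exp_pos (- (2 * d * g))); lra.
  assert (0 < (b * b + g * g)) by nra. nra.
Qed.
End Regions.

Lemma trig_id m g V a : 0 < m -> m * m + g * g = V * V ->
  (m * m - g * g) * sin a - 2 * g * m * cos a = V * V * sin (a - 2 * atan (g / m)).
Proof.
  intros Hm HV.
  rewrite sin_minus, sin_2a, cos_2a.
  set (t := g / m).
  assert (Hs : 0 < 1 + t²) by (unfold Rsqr; nra).
  assert (Hss : sqrt (1 + t²) * sqrt (1 + t²) = 1 + t²) by (apply sqrt_sqrt; lra).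
  assert (Hsp : 0 < sqrt (1 + t²)) by (apply sqrt_lt_R0; lra).
  assert (Hc2 : cos (atan t) * cos (atan t) = / (1 + t²)).
  { rewrite cos_atan. replace (1 / sqrt (1 + t²) * (1 / sqrt (1 + t²))) with (/ (sqrt (1 + t²) * sqrt (1 + t²))) by (field; lra). rewrite Hss. reflexivity. }
  assert (Hsn2 : sin (atan t) * sin (atan t) = t * t / (1 + t²)).
  { rewrite sin_atan. replace (t / sqrt (1 + t²) * (t / sqrt (1 + t²))) with (t * t / (sqrt (1 + t²) * sqrt (1 + t²))) by (field; lra). rewrite Hss. reflexivity. }
  assert (Hsc : sin (atan t) * cos (atan t) = t / (1 + t²)).
  { rewrite sin_atan, cos_atan. replace (t / sqrt (1 + t²) * (1 / sqrt (1 + t²))) with (t / (sqrt (1 + t²) * sqrt (1 + t²))) by (field; lra). rewrite Hss. reflexivity. }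
  assert (E1 : V * V = m * m * (1 + t²)).
  { unfold t, Rsqr. rewrite <- HV. field. lra. }
  rewrite E1.
  replace (sin a * (cos (atan t) * cos (atan t) - sin (atan t) * sin (atan t)) -
           cos a * (2 * sin (atan t) * cos (atan t)))
    with (sin a * (cos (atan t) * cos (atan t)) - sin a * (sin (atan t) * sin (atan t)) -
           2 * cos a * (sin (atan t) * cos (atan t))) by ring.
  rewrite Hc2, Hsn2, Hsc. field_simplify; [|lra]. unfold t, Rsqr. field. lra.
Qed.

Section Guided.
Variables k1 k2 d : R.
Hypothesis hk1 : 0 < k1.
Hypothesis hk12 : k1 < k2.
Hypothesis hd : 0 < d.

Definition mf (x : R) := sqrt (k2 ^ 2 - x ^ 2).
Definition gf (x : R) := sqrt (- (k1 ^ 2 - x ^ 2)).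
Definition VV := sqrt (k2 ^ 2 - k1 ^ 2).
Definition Th (x : R) := 2 * d * mf x - 2 * atan (gf x / mf x).

Lemma VV_pos : 0 < VV.
Proof. unfold VV. apply sqrt_lt_R0. nra. Qed.
Lemma VV_sq : VV * VV = k2 ^ 2 - k1 ^ 2.
Proof. unfold VV. apply sqrt_sqrt. nra. Qed.

Lemma mf_pos x : 0 <= x < k2 -> 0 < mf x.
Proof. intros H. unfold mf. apply sqrt_lt_R0. nra. Qed.
Lemma mf_sq x : 0 <= x <= k2 -> mf x * mf x = k2 ^ 2 - x ^ 2.
Proof. intros H. unfold mf. apply sqrt_sqrt. nra. Qed.
Lemma gf_sq x : k1 <= x -> gf x * gf x = x ^ 2 - k1 ^ 2.
Proof. intros H. unfold gf. rewrite sqrt_sqrt; nra. Qed.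
Lemma gf_nonneg x : 0 <= gf x.
Proof. apply sqrt_pos. Qed.

Lemma W0_guided x : k1 < x < k2 ->
  W0f k1 k2 d x = ((exp (- (2 * d * gf x)) * (VV * VV * sin (Th x) / mf x)), 0).
Proof.
  intros Hx. rewrite W0_R2 by nra. fold (gf x) (mf x).
  assert (Hm := mf_pos x ltac:(lra)).
  f_equal. f_equal. unfold Th. rewrite <- trig_id; auto.
  - field. lra.
  - rewrite mf_sq, gf_sq, VV_sq by lra. ring.
Qed.

Lemma Th_decr x y : k1 <= x -> x < y -> y < k2 -> Th y < Th x.
Proof.
  intros H1 H2 H3. unfold Th.
  assert (Hmx := mf_pos x ltac:(lra)). assert (Hmy := mf_pos y ltac:(lra)).
  assert (Hm : mf y < mf x) by (unfold mf; apply sqrt_lt_1_alt; nra).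
  assert (Hg : gf x <= gf y) by (unfold gf; apply sqrt_le_1_alt; nra).
  pose proof (gf_nonneg x). pose proof (gf_nonneg y).
  assert (Hq : gf x / mf x <= gf y / mf y).
  { apply Rle_trans with (gf y / mf x).
    - unfold Rdiv. apply Rmult_le_compat_r; auto. left; apply Rinv_0_lt_compat; auto.
    - unfold Rdiv. apply Rmult_le_compat_l; auto. apply Rinv_le_contravar; lra. }
  assert (Ha : atan (gf x / mf x) <= atan (gf y / mf y)).
  { destruct Hq as [Hq|Hq]. left; apply atan_increasing; auto. rewrite Hq; lra. }
  nra.
Qed.

Lemma Th_inj x y : k1 <= x < k2 -> k1 <= y < k2 -> Th x = Th y -> x = y.
Proof.
  intros Hx Hy E. destruct (Rtotal_order x y) as [l|[e|l]]; auto.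
  - pose proof (Th_decr x y ltac:(lra) l ltac:(lra)). lra.
  - pose proof (Th_decr y x ltac:(lra) l ltac:(lra)). lra.
Qed.

Lemma Th_k1 : Th k1 = 2 * d * VV.
Proof.
  unfold Th, gf, mf, VV. replace (- (k1 ^ 2 - k1 ^ 2)) with 0 by ring. rewrite sqrt_0.
  unfold Rdiv. rewrite Rmult_0_l, atan_0. ring.
Qed.

Lemma Th_bounds x : k1 < x < k2 -> - PI < Th x < 2 * d * VV.
Proof.
  intros Hx. split.
  - unfold Th. assert (Hm := mf_pos x ltac:(lra)). pose proof (atan_bound (gf x / mf x)). nra.
  - rewrite <- Th_k1. apply Th_decr; lra.
Qed.

Lemma Th_cont x : 0 <= x < k2 -> continuity_pt Th x.
Proof.
  intros Hx. apply continuity_pt_filterlim. unfold Th.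
  assert (Hm := mf_pos x Hx).
  assert (Lm : filterlim mf (locally x) (locally (mf x))).
  { unfold mf. apply lim_cont; [|apply continuous_sqrt].
    apply lim_Rminus. apply lim_const. simpl. apply lim_Rmult. apply filterlim_id.
    apply lim_Rmult. apply filterlim_id. apply lim_const. }
  apply lim_Rminus. apply lim_Rmult; auto. apply lim_const.
  apply lim_Rmult. apply lim_const. apply lim_cont; [|apply continuous_atan].
  apply lim_Rmult; [|apply lim_Rinv; auto; lra].
  unfold gf. apply lim_cont; [|apply continuous_sqrt].
  apply lim_Ropp. apply lim_Rminus. apply lim_const. simpl. apply lim_Rmult. apply filterlim_id.
  apply lim_Rmult. apply filterlim_id. apply lim_const.
Qed.

Lemma low_point : exists xL, k1 < xL < k2 /\ Th xL < 0.
Proof.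
  pose proof VV_pos as HV. pose proof VV_sq as HV2.
  set (ms := Rmin (VV / 2) (1 / (2 * d))).
  assert (Hms : 0 < ms) by (unfold ms; apply Rmin_glb_lt; [lra|apply Rdiv_lt_0_compat; lra]).
  assert (Hms1 : ms <= VV / 2) by apply Rmin_l.
  assert (Hms2 : ms <= 1 / (2 * d)) by apply Rmin_r.
  assert (Hk : 0 <= k2 ^ 2 - ms ^ 2) by nra.
  set (xL := sqrt (k2 ^ 2 - ms ^ 2)).
  assert (HxL2 : xL * xL = k2 ^ 2 - ms ^ 2) by (apply sqrt_sqrt; auto).
  assert (HxL0 : 0 <= xL) by apply sqrt_pos.
  assert (HxL : k1 < xL < k2) by (split; nra).
  exists xL. split; auto.
  assert (Em : mf xL = ms).
  { unfold mf. replace (k2 ^ 2 - xL ^ 2) with (ms * ms) by nra. apply sqrt_square. lra. }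
  assert (Hg : ms <= gf xL).
  { unfold gf. rewrite <- (sqrt_square ms) by lra. apply sqrt_le_1_alt. nra. }
  assert (Ha : PI / 4 <= atan (gf xL / mf xL)).
  { rewrite <- atan_1. rewrite Em. destruct (Req_dec (gf xL / ms) 1) as [e|n].
    rewrite e; lra. left. apply atan_increasing.
    assert (1 <= gf xL / ms). { apply (Rmult_le_reg_r ms); auto. unfold Rdiv. rewrite Rmult_assoc, Rinv_l; lra. }
    lra. }
  unfold Th. rewrite Em in *.
  assert (2 * d * ms <= 1).
  { apply Rle_trans with (2 * d * (1 / (2 * d))). apply Rmult_le_compat_l; lra. right; field; lra. }
  pose proof PI2_3_2. lra.
Qed.

Lemma root_ex (j : nat) :
  { z : R | INR j * PI < 2 * d * VV -> k1 < z < k2 /\ Th z = INR j * PI }.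
Proof.
  destruct (Rlt_dec (INR j * PI) (2 * d * VV)) as [Hj|Hj]; [|exists 0; intros; contradiction].
  destruct (constructive_indefinite_description _ low_point) as [xL [HxL HxL']].
  destruct (Ranalysis5.IVT_interv (fun z => INR j * PI - Th z) k1 xL) as [z [Hz Hz']].
  - intros a Ha. apply continuity_pt_minus. apply continuity_pt_const. intros u v; reflexivity.
    apply Th_cont; lra.
  - lra.
  - rewrite Th_k1. lra.
  - pose proof (pos_INR j). pose proof PI_RGT_0. nra.
  - exists z. intros _. assert (Hz2 : Th z = INR j * PI) by lra. split; auto.
    split; [|lra]. destruct (Req_dec z k1) as [e|n]; [|lra].
    subst z. rewrite Th_k1 in Hz2. lra.
Qed.

Definition ThD (x : R) :=
  2 * d * (- x / mf x) - 2 * ((x / gf x) / mf x + gf x * (x / mf x) / (mf x * mf x)) / (1 + (gf x / mf x) ^ 2).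

Lemma Th_derive x : k1 < x < k2 -> is_derive Th x (ThD x).
Proof.
  intros Hx. unfold Th, ThD, mf, gf.
  assert (H1 : 0 < k2 ^ 2 - x ^ 2) by nra.
  assert (H2 : 0 < - (k1 ^ 2 - x ^ 2)) by nra.
  assert (S1 := sqrt_lt_R0 _ H1). assert (S2 := sqrt_lt_R0 _ H2).
  auto_derive.
  all: assert (E1 : k2*(k2*1) + - (x*(x*1)) = k2^2 - x^2) by ring.
  all: assert (E2 : -(k1*(k1*1) + -(x*(x*1))) = -(k1^2 - x^2)) by ring.
  all: rewrite ?E1, ?E2.
  - repeat split; try lra.
  - set (m := sqrt (k2 ^ 2 - x ^ 2)) in *. set (g := sqrt (- (k1 ^ 2 - x ^ 2))) in *.
    unfold Rsqr. field. split; [lra|split; [lra|]]. nra.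
Qed.

Lemma ThD_neg x : k1 < x < k2 -> ThD x < 0.
Proof.
  intros Hx. unfold ThD.
  assert (Hm := mf_pos x ltac:(lra)).
  assert (Hg : 0 < gf x) by (unfold gf; apply sqrt_lt_R0; nra).
  assert (A : 0 < (x / gf x) / mf x + gf x * (x / mf x) / (mf x * mf x)).
  { apply Rplus_lt_0_compat; repeat apply Rdiv_lt_0_compat; try apply Rmult_lt_0_compat; try apply Rdiv_lt_0_compat; lra. }
  assert (B : 0 < 1 + (gf x / mf x) ^ 2) by (pose proof (pow2_ge_0 (gf x / mf x)); lra).
  assert (C : 0 < x / mf x) by (apply Rdiv_lt_0_compat; lra).
  assert (D : 0 < ((x / gf x) / mf x + gf x * (x / mf x) / (mf x * mf x)) / (1 + (gf x / mf x) ^ 2)) by (apply Rdiv_lt_0_compat; auto).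
  unfold Rdiv in *. nra.
Qed.

Lemma W0_derive_root x : k1 < x < k2 -> sin (Th x) = 0 ->
  exists l : C, l <> RtoC 0 /\ is_derive (W0f k1 k2 d) x l.
Proof.
  intros Hx Hs.
  set (P := fun y => exp (- (2 * d * gf y)) * (VV * VV) / mf y).
  assert (HP : ex_derive P x).
  { unfold P, gf, mf. auto_derive. repeat split; try nra.
    apply Rgt_not_eq. apply sqrt_lt_R0. nra. }
  destruct HP as [P' HP'].
  assert (Hm := mf_pos x ltac:(lra)).
  assert (HPx : 0 < P x).
  { unfold P. apply Rdiv_lt_0_compat; auto. apply Rmult_lt_0_compat. apply exp_pos. pose proof VV_pos. nra. }
  set (l := P x * (ThD x * cos (Th x))).
  assert (Hc : cos (Th x) <> 0) by (intros E; apply (cos_sin_0 (Th x)); auto).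
  assert (Hl : l <> 0).
  { unfold l. pose proof (ThD_neg x Hx). apply Rmult_integral_contrapositive; split; [lra|].
    apply Rmult_integral_contrapositive; split; [lra|auto]. }
  exists ((l, 0) : C). split.
  { intros E. injection E as E. auto. }
  set (r := Rmin (x - k1) (k2 - x)).
  assert (Hr : 0 < r) by (unfold r; apply Rmin_glb_lt; lra).
  apply (is_derive_ext_loc (fun y => ((P y * sin (Th y), 0) : C))).
  { exists (mkposreal r Hr). intros y Hy.
    unfold ball in Hy; simpl in Hy; unfold AbsRing_ball, abs, minus, plus, opp in Hy; simpl in Hy.
    apply Rabs_lt_between in Hy. assert (Hy' : k1 < y < k2).
    { pose proof (Rmin_l (x - k1) (k2 - x)). pose proof (Rmin_r (x - k1) (k2 - x)). fold r in H, H0. lra. }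
    rewrite W0_guided by auto. unfold P. assert (Hmy := mf_pos y ltac:(lra)). f_equal. field. lra. }
  apply is_derive_C.
  - eapply Rd_eq. apply (Rd_mult _ _ x _ _ HP' (Rd_sin _ _ _ (Th_derive x Hx))).
    rewrite Hs. unfold l. rewrite Rmult_0_r, Rplus_0_l. reflexivity.
  - apply (is_derive_const 0 x).
Qed.


Lemma W0_derive_opp x l : l <> RtoC 0 -> is_derive (W0f k1 k2 d) x l ->
  exists l' : C, l' <> RtoC 0 /\ is_derive (W0f k1 k2 d) (- x) l'.
Proof.
  intros Hl H. exists (Copp l). split.
  { intros E. apply Hl. destruct l as [a b]. unfold RtoC in *. cunf. injection E; intros. f_equal; lra. }
  apply (is_derive_ext (fun t => W0f k1 k2 d (- t))).
  { intros t. apply W0_even. }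
  apply is_derive_reflect. rewrite Ropp_involutive. exact H.
Qed.
End Guided.

Lemma M_exists k1 k2 d : 0 < k1 -> k1 < k2 -> 0 < d ->
  (forall n : nat, (1 <= n)%nat -> 2 * d * sqrt (k2 ^ 2 - k1 ^ 2) <> INR n * PI) ->
  exists M : nat, INR M * PI < 2 * d * VV k1 k2 /\ 2 * d * VV k1 k2 < INR (S M) * PI.
Proof.
  intros hk1 hk12 hd hres.
  pose proof (VV_pos k1 k2 hk1 hk12) as HV. pose proof PI_RGT_0 as Hpi.
  set (X := 2 * d * VV k1 k2 / PI).
  assert (HX : 0 < X) by (unfold X; apply Rdiv_lt_0_compat; nra).
  destruct (archimed X) as [A1 A2].
  set (z := up X) in *.
  assert (Hz : (1 <= z)%Z).
  { assert (0 < IZR z) by lra. apply lt_0_IZR in H. lia. }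
  exists (Z.to_nat (z - 1)).
  assert (E : INR (Z.to_nat (z - 1)) = IZR z - 1).
  { rewrite INR_IZR_INZ, Z2Nat.id by lia. rewrite minus_IZR. reflexivity. }
  assert (E' : INR (S (Z.to_nat (z - 1))) = IZR z) by (rewrite S_INR, E; ring).
  assert (HXP : X * PI = 2 * d * VV k1 k2) by (unfold X; field; lra).
  split.
  - assert (Hle : INR (Z.to_nat (z - 1)) * PI <= 2 * d * VV k1 k2).
    { rewrite <- HXP. apply Rmult_le_compat_r; lra. }
    destruct Hle as [Hle|Hle]; auto. exfalso.
    destruct (Nat.eq_dec (Z.to_nat (z - 1)) 0) as [e|n].
    + rewrite e in Hle. simpl in Hle. nra.
    + apply (hres (Z.to_nat (z - 1))). lia. unfold VV in Hle. lra.
  - rewrite E', <- HXP. apply Rmult_lt_compat_r; lra.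
Qed.

Lemma W0_nonguided k1 k2 d x : 0 < k1 -> k1 < k2 -> 0 < d ->
  (forall n : nat, (1 <= n)%nat -> 2 * d * sqrt (k2 ^ 2 - k1 ^ 2) <> INR n * PI) ->
  0 <= x -> W0f k1 k2 d x = RtoC 0 -> k1 < x < k2.
Proof.
  intros hk1 hk12 hd hres Hx E.
  destruct (Rle_or_lt x k1) as [H1|H1].
  { exfalso. apply (W0_R1_neq0 k1 k2 d hk1 hk12 hd x); auto. nra. }
  destruct (Rlt_or_le x k2) as [H2|H2]; [lra|].
  exfalso. destruct H2 as [H2|H2].
  - apply (W0_R4_neq0 k1 k2 d hk1 hk12 hd x); auto. nra.
  - apply (W0_R3_neq0 k1 k2 d hk1 hk12 hd x); auto. subst; ring.
Qed.

Theorem theorem2 (k1 k2 d : R)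
  (up up' um um' : R -> R -> R -> C)
  (hk1 : 0 < k1) (hk12 : k1 < k2) (hd : 0 < d)
  (hres : forall n : nat, (1 <= n)%nat ->
            2 * d * sqrt (k2 ^ 2 - k1 ^ 2) <> INR n * PI)
  (hup : forall xi delta, 0 < delta ->
           is_u_plus k1 k2 d xi delta (up xi delta) (up' xi delta))
  (hum : forall xi delta, 0 < delta ->
           is_u_minus k1 k2 d xi delta (um xi delta) (um' xi delta)) :
  let W := fun xi delta =>
    wronskian (um xi delta) (um' xi delta) (up xi delta) (up' xi delta) 0 in
  (* no solutions with delta > 0 *)
  (forall xi delta, 0 < delta -> W xi delta <> 0%C) /\
  (* W(xi, 0+) exists for every real xi, and its zeros are exactly the +-xi_n *)
  exists W0 : R -> C,
    (forall xi, filterlim (fun delta => W xi delta) (at_right 0) (locally (W0 xi))) /\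
    exists (N : nat) (xis : nat -> R),
      (1 <= N)%nat /\
      (forall n, (1 <= n <= N)%nat -> k1 < Rabs (xis n) < k2) /\
      (forall n, (1 <= n <= N)%nat ->
         (exists l : C, l <> 0%C /\ is_derive W0 (xis n) l) /\
         (exists l : C, l <> 0%C /\ is_derive W0 (- xis n) l)) /\
      (forall xi, W0 xi = 0%C <->
         exists n, (1 <= n <= N)%nat /\ (xi = xis n \/ xi = - xis n)).
Proof.
  intros W. split.
  { intros xi delta hdel. unfold W. apply (W_pos_neq0 k1 k2 d xi delta); auto. }
  exists (W0f k1 k2 d). split.
  { intros xi. unfold W. apply W_limit; auto. }
  destruct (M_exists k1 k2 d hk1 hk12 hd hres) as [M [HM1 HM2]].
  pose proof PI_RGT_0 as Hpi.
  set (xis := fun n : nat => proj1_sig (root_ex k1 k2 d hk1 hk12 hd (n - 1))).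
  assert (Hroot : forall n, (1 <= n <= S M)%nat -> k1 < xis n < k2 /\ Th k1 k2 d (xis n) = INR (n - 1) * PI).
  { intros n Hn. unfold xis. destruct (root_ex k1 k2 d hk1 hk12 hd (n - 1)) as [z Hz]. simpl.
    apply Hz. apply Rle_lt_trans with (INR M * PI); auto.
    apply Rmult_le_compat_r; [lra|]. apply le_INR. lia. }
  assert (Hsin : forall n, (1 <= n <= S M)%nat -> sin (Th k1 k2 d (xis n)) = 0).
  { intros n Hn. rewrite (proj2 (Hroot n Hn)). apply sin_eq_0_1. exists (Z.of_nat (n - 1)).
    rewrite INR_IZR_INZ. reflexivity. }
  assert (Hz0 : forall n, (1 <= n <= S M)%nat -> W0f k1 k2 d (xis n) = RtoC 0).
  { intros n Hn. rewrite (W0_guided k1 k2 d hk1 hk12) by apply (Hroot n Hn).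
    rewrite Hsin by auto. unfold RtoC. f_equal. unfold Rdiv. ring. }
  exists (S M), xis. split; [lia|]. split; [|split].
  - intros n Hn. destruct (Hroot n Hn) as [H _]. rewrite Rabs_pos_eq by lra. auto.
  - intros n Hn. destruct (Hroot n Hn) as [H _].
    destruct (W0_derive_root k1 k2 d hk1 hk12 hd (xis n) H (Hsin n Hn)) as [l [Hl Hd]].
    split. exists l; auto.
    apply (W0_derive_opp k1 k2 d (xis n) l); auto.
  - intros xi. split.
    + intros E.
      set (x := Rabs xi).
      assert (Ex : W0f k1 k2 d x = RtoC 0).
      { unfold x. destruct (Rle_or_lt 0 xi).
        rewrite Rabs_pos_eq by lra. exact E.
        rewrite Rabs_left by lra. rewrite (W0_even k1 k2 d). exact E. }
      assert (Hx0 : 0 <= x) by apply Rabs_pos.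
      pose proof (W0_nonguided k1 k2 d x hk1 hk12 hd hres Hx0 Ex) as Hx.
      rewrite (W0_guided k1 k2 d hk1 hk12) in Ex by auto.
      injection Ex as Ex.
      assert (Hs : sin (Th k1 k2 d x) = 0).
      { apply Rmult_integral in Ex. destruct Ex as [Ex|Ex].
        pose proof (exp_pos (- (2 * d * gf k1 x))); lra.
        pose proof (VV_pos k1 k2 hk1 hk12). pose proof (mf_pos k2 x ltac:(lra)).
        unfold Rdiv in Ex. apply Rmult_integral in Ex. destruct Ex as [Ex|Ex].
        apply Rmult_integral in Ex. destruct Ex as [Ex|Ex]; [nra|auto].
        exfalso. apply (Rinv_neq_0_compat (mf k2 x)); lra. }
      apply sin_eq_0_0 in Hs. destruct Hs as [k Hk].
      pose proof (Th_bounds k1 k2 d hk1 hd x Hx) as [B1 B2].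
      rewrite Hk in B1, B2.
      assert (Hk0 : (0 <= k)%Z).
      { assert (-1 < IZR k) by nra. apply lt_IZR in H. lia. }
      assert (HkM : (k <= Z.of_nat M)%Z).
      { assert (IZR k < INR (S M)) by nra. rewrite INR_IZR_INZ in H. apply lt_IZR in H. lia. }
      set (n := S (Z.to_nat k)).
      assert (Hn : (1 <= n <= S M)%nat) by (unfold n; lia).
      exists n. split; auto.
      assert (Ex2 : x = xis n).
      { destruct (Hroot n Hn) as [Hr1 Hr2].
        apply (Th_inj k1 k2 d hk1 hd); try lra.
        rewrite Hr2, Hk. unfold n. replace (S (Z.to_nat k) - 1)%nat with (Z.to_nat k) by lia.
        rewrite INR_IZR_INZ, Z2Nat.id by lia. reflexivity. }
      unfold x in Ex2. destruct (Rle_or_lt 0 xi).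
      * left. rewrite Rabs_pos_eq in Ex2 by lra. auto.
      * right. rewrite Rabs_left in Ex2 by lra. lra.
    + intros [n [Hn [E|E]]]; subst xi.
      * apply Hz0; auto.
      * rewrite (W0_even k1 k2 d). apply Hz0; auto.
Qed.
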